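(* Under the setting described in the context, assume that for all $x\in\mathcal{A}$ and all $i\in\{1,\dots,n\}$, $$d_{xi}>0 \implies \phi_{ix}>0.$$ Define $$\tilde J(i)=\sum_{x\in\mathcal{A}}\phi_{ix}\,r^*_x,\qquad i=1,\dots,n,$$ and $$\epsilon=\max_{x\in\mathcal{A}}\ \max_{\{i,j\,:\,\phi_{ix}>0,\ \phi_{jx}>0\}}|J^*(i)-J^*(j)|.$$ Then $$|J^*(i)-\tilde J(i)|\le \frac{\epsilon}{1-\alpha},\qquad i=1,\dots,n.$$
   Context: Consider a discounted Markov decision problem with states $1,\dots,n$. For each state $i$ there is a finite nonempty control set $U(i)$. Under control $u\in U(i)$, the system moves from $i$ to $j$ with probability $p_{ij}(u)$ (with $\sum_j p_{ij}(u)=1$) and incurs cost $g(i,u,j)\in\mathbb{R}$. The cost at stage $k$ is discounted by $\alpha^k$, where $\alpha\in(0,1)$. A (deterministic stationary) policy $\mu$ selects $\mu(i)\in U(i)$ for each $i$. $J_\mu(i)$ denotes the total expected discounted cost of $\mu$ starting from $i$, and $J^*(i)=\min_\mu J_\mu(i)$. Equivalently, $J^*$ is the unique solution of $$J^*(i)=\min_{u\in U(i)}\sum_{j=1}^n p_{ij}(u)\big(g(i,u,j)+\alpha J^*(j)\big),\qquad i=1,\dots,n.$$ Aggregation framework: Let $\mathcal{A}$ be a finite set of ''aggregate states''. For each $x\in\mathcal{A}$ we are given a probability distribution $\{d_{xi}\}_{i=1}^n$ on $\{1,\dots,n\}$ (the disaggregation probabilities). For each original state $j$ we are given a probability distribution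 $\{\phi_{jy}\}_{y\in\mathcal{A}}$ on $\mathcal{A}$ (the aggregation probabilities). Define the operator $H:\mathbb{R}^{\mathcal{A}}\to\mathbb{R}^{\mathcal{A}}$ by $$(Hr)(x)=\sum_{i=1}^n d_{xi}\min_{u\in U(i)}\sum_{j=1}^n p_{ij}(u)\Big(g(i,u,j)+\alpha\sum_{y\in\mathcal{A}}\phi_{jy}\,r_y\Big),\qquad x\in\mathcal{A}.$$ $H$ is a contraction with respect to the maximum norm. Let $r^*=(r^*_x)_{x\in\mathcal{A}}$ be its unique fixed point $r^*=Hr^*$; this is the optimal cost vector of the aggregate problem. *)

(* Defs.v *)
From mathcomp Require Import all_boot all_order all_algebra.
Set Implicit Arguments. Unset Strict Implicit. Unset Printing Implicit Defensive.
Import Order.TTheory GRing.Theory Num.Theory.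
Local Open Scope ring_scope.

(* Minimum of f over a finite set S (value 0 if S is empty; only used for
   nonempty S). *)
Definition minU (R : realFieldType) (C : finType) (S : {set C}) (f : C -> R) : R :=
  match [pick u in S] with
  | Some u0 => \big[Num.min/f u0]_(u in S) f u
  | None => 0
  end.

Definition Qval (R : realFieldType) (n : nat) (C : finType)
  (p g : 'I_n -> C -> 'I_n -> R) (alpha : R) (V : 'I_n -> R) (i : 'I_n) (u : C) : R :=
  \sum_(j < n) p i u j * (g i u j + alpha * V j).

Definition bellmanT (R : realFieldType) (n : nat) (C : finType) (U : 'I_n -> {set C})
  (p g : 'I_n -> C -> 'I_n -> R) (alpha : R) (V : 'I_n -> R) (i : 'I_n) : R :=
  minU (U i) (Qval p g alpha V i).

Definition aggH (R : realFieldType) (n : nat) (C A : finType) (U : 'I_n -> {set C})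
  (p g : 'I_n -> C -> 'I_n -> R) (alpha : R)
  (d : A -> 'I_n -> R) (phi : 'I_n -> A -> R) (r : A -> R) (x : A) : R :=
  \sum_(i < n) d x i * bellmanT U p g alpha (fun j => \sum_(y : A) phi j y * r y) i.

Definition Jtilde (R : realFieldType) (n : nat) (A : finType)
  (phi : 'I_n -> A -> R) (r : A -> R) (i : 'I_n) : R :=
  \sum_(x : A) phi i x * r x.

(* epsilon = max_x max_{i,j : phi_ix>0, phi_jx>0} |J(i) - J(j)|
   (empty maxima default to 0, harmless since all terms are >= 0) *)
Definition aggEps (R : realFieldType) (n : nat) (A : finType)
  (phi : 'I_n -> A -> R) (J : 'I_n -> R) : R :=
  \big[Num.max/0]_(x : A)
    \big[Num.max/0]_(i < n | 0 < phi i x)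
      \big[Num.max/0]_(j < n | 0 < phi j x) `|J i - J j|.

(* Main.v *)
Require Import Defs.
From mathcomp Require Import all_boot all_order all_algebra.
From mathcomp Require Import lra.
Import Order.TTheory GRing.Theory Num.Theory.
Local Open Scope ring_scope.

Lemma minU_le (R : realFieldType) (C : finType) (S : {set C}) (f : C -> R) u :
  u \in S -> minU S f <= f u.
Proof.
move=> uS; rewrite /minU; case: pickP => [u0 _|]; last by move/(_ u); rewrite uS.
rewrite (bigD1 u) //=; by rewrite ge_min lexx.
Qed.

Lemma minU_ge (R : realFieldType) (C : finType) (S : {set C}) (f : C -> R) c :
  S != set0 -> (forall u, u \in S -> c <= f u) -> c <= minU S f.
Proof.
move=> /set0Pn [w wS] H; rewrite /minU; case: pickP => [u0 u0S|]; last by move/(_ w); rewrite wS.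
apply: (big_ind (fun v => c <= v)); first exact: H.
  by move=> a b ha hb; rewrite le_min ha hb.
by move=> k kS; exact: H.
Qed.

Lemma minU_lip (R : realFieldType) (C : finType) (S : {set C}) (f g : C -> R) c :
  S != set0 -> (forall u, u \in S -> `|f u - g u| <= c) -> `|minU S f - minU S g| <= c.
Proof.
move=> S0 H; rewrite ler_norml.
have h1 : minU S g - c <= minU S f.
  apply: minU_ge => // u uS; have := @minU_le _ _ S g u uS.
  by have := H u uS; rewrite ler_norml => /andP[h _]; lra.
have h2 : minU S f - c <= minU S g.
  apply: minU_ge => // u uS; have := @minU_le _ _ S f u uS.
  by have := H u uS; rewrite ler_norml => /andP[_ h]; lra.
apply/andP; split; lra.
Qed.

Lemma bigmax0_ge (R : realFieldType) (I : Type) (r : seq I) (P : pred I) (F : I -> R) :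
  0 <= \big[Num.max/0]_(i <- r | P i) F i.
Proof. by apply: (big_rec (fun v => 0 <= v)) => // i v _ h; rewrite le_max h orbT. Qed.

Theorem mainTheorem1 (R : realFieldType) (n : nat) (C A : finType)
  (U : 'I_n -> {set C}) (p g : 'I_n -> C -> 'I_n -> R) (alpha : R)
  (d : A -> 'I_n -> R) (phi : 'I_n -> A -> R)
  (Jstar : 'I_n -> R) (rstar : A -> R) :
  (forall i, U i != set0) ->
  (forall i u j, u \in U i -> 0 <= p i u j) ->
  (forall i u, u \in U i -> \sum_(j < n) p i u j = 1) ->
  0 < alpha -> alpha < 1 ->
  (forall x i, 0 <= d x i) -> (forall x, \sum_(i < n) d x i = 1) ->
  (forall j y, 0 <= phi j y) -> (forall j, \sum_(y : A) phi j y = 1) ->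
  (forall i, Jstar i = bellmanT U p g alpha Jstar i) ->
  (forall x, rstar x = aggH U p g alpha d phi rstar x) ->
  (forall x i, 0 < d x i -> 0 < phi i x) ->
  forall i, `|Jstar i - Jtilde phi rstar i| <= aggEps phi Jstar / (1 - alpha).
Proof.
move=> U0 p0 p1 a0 a1 d0 d1 f0 f1 HJ Hr Hdf.
set Jt := Jtilde phi rstar.
set eps := aggEps phi Jstar.
set M := \big[Num.max/0]_(j < n) `|Jstar j - Jt j|.
have Mj j : `|Jstar j - Jt j| <= M by exact: le_bigmax.
have M0 : 0 <= M by exact: bigmax0_ge.
have eps0 : 0 <= eps by exact: bigmax0_ge.
have Heps x i k : 0 < phi i x -> 0 < phi k x -> `|Jstar i - Jstar k| <= eps.
  move=> hi hk; rewrite /eps /aggEps.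
  have e1 := @le_bigmax_cond _ _ _ (0:R) k (fun j => 0 < phi j x) (fun j => `|Jstar i - Jstar j|) hk.
  have e2 := @le_bigmax_cond _ _ _ (0:R) i (fun i => 0 < phi i x) (fun i => \big[Num.max/0]_(j < n | 0 < phi j x) `|Jstar i - Jstar j|) hi.
  have e3 := le_bigmax (0:R) (fun x => \big[Num.max/0]_(i < n | 0 < phi i x) \big[Num.max/0]_(j < n | 0 < phi j x) `|Jstar i - Jstar j|) x.
  exact: le_trans e1 (le_trans e2 e3).
(* T is alpha-Lipschitz *)
have HT k : `|bellmanT U p g alpha Jt k - Jstar k| <= alpha * M.
  rewrite [Jstar k]HJ /bellmanT; apply: minU_lip => // u uS.
  rewrite /Qval -sumrB.
  apply: le_trans (ler_norm_sum _ _ _) _.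
  apply: (le_trans (y := \sum_(j < n) p k u j * (alpha * M))).
    apply: ler_sum => j _.
    rewrite -mulrBr normrM ger0_norm ?p0 //.
    apply: ler_wpM2l; first exact: p0.
    rewrite opprD addrACA subrr add0r -mulrBr normrM ger0_norm ?(ltW a0) //.
    by apply: ler_wpM2l; [exact: ltW|]; rewrite distrC.
  by rewrite -mulr_suml p1 // mul1r.
have Hrx x i : 0 < phi i x -> `|Jstar i - rstar x| <= alpha * M + eps.
  move=> hi.
  have -> : Jstar i - rstar x =
      \sum_(k < n) d x k * (Jstar i - bellmanT U p g alpha Jt k).
    rewrite [rstar x]Hr /aggH.
    under [RHS]eq_bigr => k _ do rewrite mulrBr.
    by rewrite sumrB -mulr_suml d1 mul1r.
  apply: le_trans (ler_norm_sum _ _ _) _.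
  apply: (le_trans (y := \sum_(k < n) d x k * (alpha * M + eps))); last first.
    by rewrite -mulr_suml d1 mul1r.
  apply: ler_sum => k _; rewrite normrM ger0_norm ?d0 //.
  have [dz|dpos] := eqVneq (d x k) 0; first by rewrite dz !mul0r.
  have hk : 0 < phi k x by apply: Hdf; rewrite lt_def dpos d0.
  apply: ler_wpM2l; first exact: d0.
  apply: le_trans (ler_distD (Jstar k) _ _) _.
  by rewrite addrC lerD // ?(Heps x i k) // distrC HT.
have HJi j : `|Jstar j - Jt j| <= alpha * M + eps.
  have -> : Jstar j - Jt j = \sum_x phi j x * (Jstar j - rstar x).
    rewrite /Jt /Jtilde.
    under [RHS]eq_bigr => k _ do rewrite mulrBr.
    by rewrite sumrB -mulr_suml f1 mul1r.
  apply: le_trans (ler_norm_sum _ _ _) _.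
  apply: (le_trans (y := \sum_x phi j x * (alpha * M + eps))); last first.
    by rewrite -mulr_suml f1 mul1r.
  apply: ler_sum => x _; rewrite normrM ger0_norm ?f0 //.
  have [fz|fpos] := eqVneq (phi j x) 0; first by rewrite fz !mul0r.
  apply: ler_wpM2l; first exact: f0.
  by apply: Hrx; rewrite lt_def fpos f0.
have HM : M <= alpha * M + eps.
  apply: bigmax_le; first by rewrite addr_ge0 // mulr_ge0 // ltW.
  by move=> j _; exact: HJi.
move=> i; apply: le_trans (Mj i) _.
rewrite ler_pdivlMr ?subr_gt0 // mulrBr mulr1.
by rewrite lerBlDr addrC mulrC.
Qed.
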